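(* For every quasiordered set $(A,\gamma)$, $$\mathrm{hsdim}(A,\gamma)\le\dim\bigl(A/(\gamma\cap\gamma^{-1}),r_\gamma\bigr).$$
   Context: A quasiorder on $A$ is a reflexive and transitive relation; $\Delta_A=\{(a,a)\mid a\in A\}$. A quasiorder $\alpha$ on $A$ is a half-space if there is a quasiorder $\beta$ on $A$ with $\alpha\cup\beta=A\times A$ and $\alpha\cap\beta=\Delta_A$. A half-space realizer of a quasiorder $\gamma$ on $A$ is a set $\{\alpha_i\mid i\in I\}$ of half-spaces on $A$ with $\bigcap_{i\in I}\alpha_i=\gamma$; the half-space dimension $\mathrm{hsdim}(A,\gamma)$ is the minimum cardinality of a half-space realizer of $\gamma$. For a quasiorder $\gamma$, $r_\gamma$ is the induced partial order on $A/(\gamma\cap\gamma^{-1})$: $([a],[b])\in r_\gamma$ iff $(a,b)\in\gamma$. For a partial order, $\dim$ denotes the order dimension: the least cardinality of a set of linear extensions whose intersection is the partial order. *)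

(* Defs.v *)
Set Implicit Arguments.
Unset Strict Implicit.

Definition relA (A : Type) := A -> A -> Prop.

Definition quasiorder (A : Type) (g : relA A) : Prop :=
  (forall a, g a a) /\ (forall a b c, g a b -> g b c -> g a c).

Definition half_space (A : Type) (alpha : relA A) : Prop :=
  quasiorder alpha /\
  exists beta : relA A, quasiorder beta /\
    (forall a b, alpha a b \/ beta a b) /\
    (forall a b, (alpha a b /\ beta a b) <-> a = b).

Definition hs_realizer (A : Type) (gamma : relA A) (H : relA A -> Prop) : Prop :=
  (forall alpha, H alpha -> half_space alpha) /\
  (forall a b, gamma a b <-> (forall alpha, H alpha -> alpha a b)).

Definition card_le (T U : Type) (X : T -> Prop) (Y : U -> Prop) : Prop :=
  exists f : {x : T | X x} -> {y : U | Y y},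
    forall u v, f u = f v -> u = v.

Definition qclass (A : Type) (gamma : relA A) (a : A) : A -> Prop :=
  fun x => gamma a x /\ gamma x a.

Definition quot (A : Type) (gamma : relA A) : Type :=
  {C : A -> Prop | exists a, C = qclass gamma a}.

Definition r_rel (A : Type) (gamma : relA A) : relA (quot gamma) :=
  fun C D => exists a b, proj1_sig C = qclass gamma a /\
                         proj1_sig D = qclass gamma b /\ gamma a b.

Definition linear_extension (T : Type) (r l : relA T) : Prop :=
  (forall x, l x x) /\
  (forall x y, l x y -> l y x -> x = y) /\
  (forall x y z, l x y -> l y z -> l x z) /\
  (forall x y, l x y \/ l y x) /\
  (forall x y, r x y -> l x y).

Definition order_realizer (T : Type) (r : relA T) (L : relA T -> Prop) : Prop :=
  (forall l, L l -> linear_extension r l) /\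
  (forall x y, r x y <-> (forall l, L l -> l x y)).

(* Main.v *)
Require Import Defs.
From Stdlib Require Import Classical ClassicalEpsilon ProofIrrelevance.
Set Implicit Arguments.
Unset Strict Implicit.

Definition cls (A : Type) (gamma : relA A) (a : A) : quot gamma :=
  exist _ (qclass gamma a) (ex_intro _ a eq_refl).

Definition alpha_of (A : Type) (gamma : relA A) (l : relA (quot gamma)) : relA A :=
  fun a b => l (cls gamma a) (cls gamma b).

Lemma alpha_hs (A : Type) (gamma : relA A) (l : relA (quot gamma)) :
  linear_extension (@r_rel A gamma) l -> half_space (alpha_of l).
Proof.
  intros [Hr [Ha [Ht [Htot _]]]]. unfold alpha_of. split.
  { split; [intro; apply Hr | intros a b c; apply Ht]. }
  exists (fun a b => a = b \/ (l (cls gamma b) (cls gamma a) /\ cls gamma a <> cls gamma b)).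
  split; [split|split].
  - intro; left; reflexivity.
  - intros a b c [->|[H1 H2]] [->|[H3 H4]]; auto.
    right; split; [eauto|]. intro E. rewrite E in H2.
    apply H2, Ha; [exact H3 | rewrite <- E; exact H1].
  - intros a b. destruct (classic (l (cls gamma a) (cls gamma b))) as [h|h]; [left; exact h|].
    right; right. destruct (Htot (cls gamma a) (cls gamma b)) as [h'|h']; [contradiction|].
    split; [exact h'|]. intro E; apply h; rewrite E; apply Hr.
  - intros a b; split.
    + intros [h [->|[h1 h2]]]; [reflexivity|]. exfalso; apply h2, Ha; assumption.
    + intros ->; split; [apply Hr| left; reflexivity].
Qed.

Theorem corollary2p10 (A : Type) (gamma : relA A) :
  quasiorder gamma ->
  forall L : relA (quot gamma) -> Prop,
    order_realizer (@r_rel A gamma) L ->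
    exists H : relA A -> Prop, @hs_realizer A gamma H /\ card_le H L.
Proof.
  intros [Hrefl Htr] L [HL1 HL2].
  exists (fun alpha => exists l, L l /\ alpha = alpha_of l).
  split; [split|].
  - intros alpha [l [Hl ->]]. apply alpha_hs, HL1, Hl.
  - intros a b; split.
    + intros g alpha [l [Hl ->]]. unfold alpha_of.
      apply (proj1 (HL2 _ _)); [|exact Hl].
      exists a, b; repeat split; auto.
    + intros Hall.
      assert (R : @r_rel A gamma (cls gamma a) (cls gamma b)).
      { apply HL2. intros l Hl. apply (Hall (alpha_of l)). exists l; auto. }
      destruct R as [a' [b' [E1 [E2 G]]]]. simpl in E1, E2.
      assert (Qa : qclass gamma a' a) by (rewrite <- E1; split; apply Hrefl).
      assert (Qb : qclass gamma b' b) by (rewrite <- E2; split; apply Hrefl).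
      destruct Qa as [_ Qa]; destruct Qb as [Qb _]. eauto.
  - set (P := fun alpha : relA A => exists l, L l /\ alpha = alpha_of l).
    assert (pick : forall u : {x | P x}, {l : relA (quot gamma) | L l /\ proj1_sig u = alpha_of l}).
    { intros [x Hx]. apply constructive_indefinite_description. exact Hx. }
    exists (fun u => exist _ (proj1_sig (pick u)) (proj1 (proj2_sig (pick u)))).
    intros u v E. injection E as E.
    destruct (proj2_sig (pick u)) as [_ Eu]. destruct (proj2_sig (pick v)) as [_ Ev].
    destruct u as [x Hx], v as [y Hy]. simpl in *.
    assert (x = y) by (rewrite Eu, Ev, E; reflexivity). subst y.
    f_equal. apply proof_irrelevance.
Qed.
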